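(* Let $G=(V,E)$ be a graph and $X\in\{0,1\}^V$ any marking vector, and let $I_X$ be the independent set returned by FIND-IS on $X$. Then $H(I_X)\ge S(X)/2$.
   Context: Identify $V$ with $[n]$ so that $d(u)\le d(v)$ whenever $u<v$, where $d(v)$ is the degree of $v$ and $N(v)$ its neighborhood. FIND-IS on marking vector $X$: vertices $v$ with $X(v)=1$ are marked; for every edge with both endpoints marked, the endpoint with smaller index (lower degree, ties broken by index) is unmarked; $I_X$ is the set of vertices remaining marked, i.e. $I_X=\{w: X(w)=1$ and no neighbor $u>w$ has $X(u)=1\}$. For an independent set $I$, $H(I)$ is the number of edges of $G$ having at least one endpoint in $I\cup N(I)$ (the edges deleted when forming the residual graph). For each vertex $v$ let $G(v)=\sum_{w\in N(v)}1/d(w)$ and $a_v=\min(1,1/G(v))$. Define $$S(v,X)=a_v\sum_{w\in N(v)}X(w)-a_v^2\sum_{\substack{w<w'\\ w,w'\in N(v)}}X(w)X(w')-a_v\sum_{w\in N(v)}\ \sum_{\substack{u:\,(w,u)\in E\\ w<u}}X(w)X(u),$$ and $S(X)=\sum_v d(v)S(v,X)$. *)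

(* Defs.v *)
(* Graph on vertex set [n] = 'I_n, given by a symmetric
   irreflexive relation e. *)
From HB Require Import structures.
From mathcomp Require Import all_boot all_order all_algebra.
Set Implicit Arguments. Unset Strict Implicit. Unset Printing Implicit Defensive.
Import Order.TTheory GRing.Theory Num.Theory.

Definition nbhd n (e : rel 'I_n) (v : 'I_n) : {set 'I_n} := [set w | e v w].
Definition deg n (e : rel 'I_n) (v : 'I_n) : nat := #|nbhd e v|.

Definition findIS n (e : rel 'I_n) (X : 'I_n -> bool) : {set 'I_n} :=
  [set w | X w && [forall u, (e w u && (w < u)%N) ==> ~~ X u]].

Definition nbhdS n (e : rel 'I_n) (I : {set 'I_n}) : {set 'I_n} :=
  [set u | [exists w in I, e w u]].

Definition Hval n (e : rel 'I_n) (I : {set 'I_n}) : nat :=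
  #|[set p : 'I_n * 'I_n | [&& (p.1 < p.2)%N, e p.1 p.2 &
       (p.1 \in I :|: nbhdS e I) || (p.2 \in I :|: nbhdS e I)]]|.

Local Open Scope ring_scope.

Definition Gv (R : realFieldType) n (e : rel 'I_n) (v : 'I_n) : R :=
  \sum_(w in nbhd e v) 1 / (deg e w)%:R.

Definition av (R : realFieldType) n (e : rel 'I_n) (v : 'I_n) : R :=
  Num.min 1 (1 / Gv R e v).

Definition Sv (R : realFieldType) n (e : rel 'I_n) (X : 'I_n -> bool) (v : 'I_n) : R :=
  av R e v * (\sum_(w in nbhd e v) (X w)%:R)
  - (av R e v) ^+ 2 *
      (\sum_(w in nbhd e v) \sum_(w' in nbhd e v | (w < w')%N) (X w)%:R * (X w')%:R)
  - av R e v *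
      (\sum_(w in nbhd e v) \sum_(u | e w u && (w < u)%N) (X w)%:R * (X u)%:R).

Definition Sval (R : realFieldType) n (e : rel 'I_n) (X : 'I_n -> bool) : R :=
  \sum_v (deg e v)%:R * Sv R e X v.

(* Main.v *)
Require Import Defs.
From HB Require Import structures.
From mathcomp Require Import all_boot all_order all_algebra.
From mathcomp Require Import ring lra.
Import Order.TTheory GRing.Theory Num.Theory.
Set Implicit Arguments. Unset Strict Implicit.
Local Open Scope ring_scope.

Lemma num_bound (R : realFieldType) (a P : R) (m : nat) :
  0 <= a -> a <= 1 -> 2 * P = m%:R * m%:R - m%:R ->
  a * m%:R - a ^+ 2 * P <= 1.
Proof.
move=> a0 a1 hP.
case: m hP => [|[|m]] hP.
- have -> : P = 0 by lra. lra.
- have -> : P = 0 by lra. lra.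
- have hM : 2 <= (m.+2)%:R :> R by rewrite (natrD _ 2 m) -[leLHS]addr0 lerD2l ler0n.
  set M := (m.+2)%:R in hM hP *.
  have hsq : 0 <= (M * (M - 1) * a - M) ^+ 2 by apply: sqr_ge0.
  have h2 : 0 <= M * (M - 2) by apply: mulr_ge0; lra.
  have hpos : 0 < M * (M - 1) by apply: mulr_gt0; lra.
  suff : 0 <= M * (M - 1) * (2 - 2 * a * M + a ^+ 2 * (M * M - M)).
    by rewrite pmulr_rge0 // => h; nra.
  have -> : M * (M - 1) * (2 - 2 * a * M + a ^+ 2 * (M * M - M)) =
     (M * (M - 1) * a - M) ^+ 2 + M * (M - 2) by ring.
  lra.
Qed.

Lemma av_ge0 (R : realFieldType) n (e : rel 'I_n) v : 0 <= av R e v.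
Proof.
rewrite /av /Gv le_min ler01 /= mul1r invr_ge0.
by apply: sumr_ge0 => w _; rewrite mul1r invr_ge0 ler0n.
Qed.

Lemma av_le1 (R : realFieldType) n (e : rel 'I_n) v : av R e v <= 1.
Proof. by rewrite /av ge_min lexx. Qed.

Section S.
Variables (R : realFieldType) (n : nat) (e : rel 'I_n) (X : 'I_n -> bool).
Variable v : 'I_n. Hypothesis esym : symmetric e.
Let I := findIS e X.
Let N := nbhd e v.
Let b (w : 'I_n) : R := ((w \in N) && (w \in I))%:R.
Let P : R := \sum_(w : 'I_n) \sum_(w' : 'I_n) (if (w < w')%N then b w * b w' else 0).
Let j : R := \sum_(w : 'I_n) b w.

Lemma inI_X w : w \in I -> X w.
Proof. by rewrite /I /findIS inE => /andP[]. Qed.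

Lemma T1_le : \sum_(w in N) (X w)%:R <=
  \sum_(w in N) (w \in I)%:R + \sum_(w in N) (X w && (w \notin I))%:R :> R.
Proof.
rewrite -big_split /=; apply: ler_sum => w _.
case: (boolP (w \in I)) => hw; first by rewrite (inI_X hw) /= addr0.
by rewrite add0r andbT.
Qed.

Lemma T3_ge : \sum_(w in N) (X w && (w \notin I))%:R <=
  \sum_(w in N) \sum_(u | e w u && (w < u)%N) (X w)%:R * (X u)%:R :> R.
Proof.
apply: ler_sum => w _.
case: (boolP (X w && (w \notin I))) => [/andP[Xw hw]|_];
  last by apply: sumr_ge0 => u _; rewrite mulr_ge0.
move: hw; rewrite /I /findIS inE Xw /= negb_forall => /existsP[u].
rewrite negb_imply negbK => /andP[hu Xu].
rewrite (bigD1 u) //= Xu mul1r lerDl.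
by apply: sumr_ge0 => u' _; rewrite mulr_ge0.
Qed.

Lemma T2_ge : P <= \sum_(w in N) \sum_(w' in N | (w < w')%N) (X w)%:R * (X w')%:R.
Proof.
rewrite /P [leRHS]big_mkcond /=; apply: ler_sum => w _.
rewrite /b; case: (boolP (w \in N)) => wN /=; last first.
  by rewrite big1 // => w' _; case: ifP => _; rewrite ?mul0r.
rewrite [leRHS]big_mkcond /=; apply: ler_sum => w' _.
case: (boolP (w' \in N)) => w'N /=; last by rewrite mulr0; case: ifP.
case: ifP => // _.
case: (boolP (w \in I)) => hw; rewrite ?mul0r ?mulr_ge0 //.
case: (boolP (w' \in I)) => hw'; rewrite ?mulr0 ?mulr_ge0 //.
by rewrite (inI_X hw) (inI_X hw').
Qed.

Lemma j_eq : \sum_(w in N) (w \in I)%:R = j.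
Proof.
rewrite /j big_mkcond /=; apply: eq_bigr => w _; rewrite /b.
by case: (w \in N).
Qed.

Lemma b01 w : b w * b w = b w.
Proof. by rewrite /b; case: (_ && _); rewrite ?mulr1 ?mulr0. Qed.

Lemma P_id : 2 * P = j * j - j.
Proof.
have -> : j * j = \sum_w \sum_w' b w * b w'.
  by rewrite /j mulr_suml; apply: eq_bigr => w _; rewrite mulr_sumr.
have split : forall w w' : 'I_n, b w * b w' =
   (if (w < w')%N then b w * b w' else 0) + (if (w' < w)%N then b w' * b w else 0)
   + (if w' == w then b w' else 0).
  move=> w w'; case: (ltngtP w w') => h.
  - by rewrite -(inj_eq val_inj) /= gtn_eqF // !addr0.
  - by rewrite -(inj_eq val_inj) /= ltn_eqF // add0r addr0 mulrC.
  - have hh : w = w' by apply: val_inj.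
    by rewrite hh eqxx !add0r b01.
rewrite (eq_bigr _ (fun w _ => eq_bigr _ (fun w' _ => split w w'))).
rewrite (eq_bigr _ (fun w _ => big_split _ _ _ _ _)) big_split /=.
rewrite (eq_bigr _ (fun w _ => big_split _ _ _ _ _)) big_split /=.
have -> : \sum_(i < n) \sum_(i0 < n) (if i0 == i then b i0 else 0) = j.
  rewrite /j; apply: eq_bigr => w _.
  by rewrite (bigD1 w) //= eqxx big1 ?addr0 // => i /negbTE ->.
have -> : \sum_(i < n) \sum_(i0 < n) (if (i0 < i)%N then b i0 * b i else 0) = P.
  by rewrite exchange_big.
rewrite /P; ring.
Qed.

Lemma j_nat : exists m : nat, j = m%:R.
Proof. by exists (\sum_w ((w \in N) && (w \in I)) : nat)%N; rewrite natr_sum. Qed.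

Lemma Sv_le : Sv R e X v <= (v \in I :|: nbhdS e I)%:R.
Proof.
set a := av R e v.
have a0 : 0 <= a := av_ge0 _ _ _. 
have a1 : a <= 1 := av_le1 _ _ _.
have h1 : Sv R e X v <= a * j - a ^+ 2 * P.
  rewrite /Sv -/a -/N.
  have t1 := T1_le; have t2 := T2_ge; have t3 := T3_ge.
  rewrite -j_eq.
  have e1 := ler_wpM2l a0 t1.
  have e3 := ler_wpM2l a0 t3.
  have e2 := ler_wpM2l (sqr_ge0 a) t2.
  rewrite mulrDr in e1. lra.
have [m hm] := j_nat.
have h2 : a * j - a ^+ 2 * P <= 1 by rewrite hm; apply: num_bound => //; rewrite -hm P_id.
case: (boolP [exists w, (w \in N) && (w \in I)]) => [/existsP[w /andP[wN wI]]|hno].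
  suff -> : v \in I :|: nbhdS e I by rewrite /= mulr1n; lra.
  rewrite inE; apply/orP; right; rewrite /nbhdS inE; apply/existsP; exists w.
  by rewrite wI /=; move: wN; rewrite /N /nbhd inE esym.
have j0 : j = 0.
  rewrite /j big1 // => w _; rewrite /b.
  by move: hno; rewrite negb_exists => /forallP /(_ w) /negbTE ->.
have : 2 * P = 0 by rewrite P_id j0; ring.
move=> hP; have P0 : P = 0 by lra.
rewrite j0 P0 !mulr0 subr0 in h1.
case: (v \in _) => /=; rewrite ?mulr1n ?mulr0n; lra.
Qed.
End S.
Lemma card_pairs n (c : 'I_n -> 'I_n -> bool) :
  #|[set p : 'I_n * 'I_n | c p.1 p.2]| = (\sum_v \sum_w (c v w : nat))%N.
Proof.
rewrite -sum1dep_card big_mkcond /= pair_big /=.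
by apply: eq_bigr => p _; case: ifP.
Qed.

Lemma deg_sum n (e : rel 'I_n) v : deg e v = (\sum_w (e v w : nat))%N.
Proof.
rewrite /deg /nbhd -sum1dep_card big_mkcond /=.
by apply: eq_bigr => p _; case: ifP.
Qed.

Lemma count_lemma n (e : rel 'I_n) (esym : symmetric e) (eirr : irreflexive e)
  (U : {set 'I_n}) :
  (\sum_v deg e v * (v \in U) <= 2 * #|[set p : 'I_n * 'I_n | [&& (p.1 < p.2)%N, e p.1 p.2 &
       (p.1 \in U) || (p.2 \in U)]]|)%N.
Proof.
rewrite (card_pairs (fun v w => [&& (v < w)%N, e v w & (v \in U) || (w \in U)])).
set c := fun v w : 'I_n => [&& (v < w)%N, e v w & (v \in U) || (w \in U)].
have -> : (\sum_v deg e v * (v \in U) = \sum_v \sum_w (e v w && (v \in U)))%N.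
  apply: eq_bigr => v _; rewrite deg_sum big_distrl /=.
  by apply: eq_bigr => w _; case: (e v w); case: (v \in U).
apply: (@leq_trans (\sum_v \sum_w (c v w + c w v))%N).
  apply: leq_sum => v _; apply: leq_sum => w _.
  case hv: (e v w && (v \in U)) => //.
  move/andP: hv => [evw vU].
  rewrite /c; case: (ltngtP v w) => h /=.
  - by rewrite evw vU.
  - by rewrite esym evw vU orbT addn1.
  - have hh : v = w by apply: val_inj.
    by rewrite hh eirr in evw.
rewrite mul2n -addnn.
rewrite (eq_bigr _ (fun v _ => big_split _ _ _ _ _)) big_split /=.
by rewrite [X in (_ + X)%N]exchange_big.
Qed.

Unset Implicit Arguments.
Set Strict Implicit.

Theorem proposition3p1 (R : realFieldType) (n : nat) (e : rel 'I_n)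
  (esym : symmetric e) (eirr : irreflexive e)
  (hdeg : forall u v : 'I_n, (u < v)%N -> (deg e u <= deg e v)%N)
  (X : 'I_n -> bool) :
  Sval R e X / 2 <= (Hval e (findIS e X))%:R.
Proof.
set U := findIS e X :|: nbhdS e (findIS e X).
have h1 : Sval R e X <= ((\sum_v deg e v * (v \in U))%N)%:R.
  rewrite /Sval natr_sum; apply: ler_sum => v _; rewrite natrM.
  by apply: ler_wpM2l; [exact: ler0n | exact: Sv_le].
have h2 : ((\sum_v deg e v * (v \in U))%N)%:R <= (2 * Hval e (findIS e X))%N%:R :> R.
  by rewrite ler_nat; exact: count_lemma.
rewrite natrM in h2.
lra.
Qed.
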